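(* Let $\mathcal V$ be an algebra of differentiable functions, $A=\bigoplus_{i\in I}\mathbb F[\partial]u_i$ with zero $\lambda$-bracket acting on $\mathcal V$ by ${u_i}_\lambda f=\sum_n\lambda^n\frac{\partial f}{\partial u_i^{(n)}}$. The map $\Phi_1:\Pi\tilde\Gamma_1\to\mathfrak g$ sending $\xi=\sum_{i\in I}u_i\otimes P_i(x)$, $P_i(x)=\sum_{n}\frac1{n!}P_{i,n}x^n$, to $\Phi_1(\xi)=\sum_{i\in I,n\in\mathbb Z_+}P_{i,n}\frac{\partial}{\partial u_i^{(n)}}$ is a Lie algebra isomorphism, and $\Phi_1(\Pi\Gamma_1)=\mathfrak g^\partial$, so it induces a Lie algebra isomorphism $\Pi\Gamma_1\simeq\mathfrak g^\partial$.
   Context: $\mathbb F$ field of characteristic 0, $I=\{1,\dots,\ell\}$. Algebra of differentiable functions $\mathcal V$: unital commutative associative with derivation $\partial$ and commuting derivations $\frac{\partial}{\partial u_i^{(n)}}$, finitely many nonzero on each element, with $[\frac{\partial}{\partial u_i^{(n)}},\partial]=\frac{\partial}{\partial u_i^{(n-1)}}$. $\mathfrak g$: Lie algebra of vector fields $\sum_{i,n}P_{i,n}\frac{\partial}{\partial u_i^{(n)}}$ ($P_{i,n}\in\mathcal V$, arbitrary families), with commutator bracket; $\mathfrak g^\partial$: those commuting with $\partial$. Every element of $\tilde\Gamma_1$ has a unique representative $\sum_iu_i\otimes P_i(x)$ with $P_i(x)\in\mathcal V[[x]]$, where $\tilde\Gamma_1=(A\otimes\mathcal V[[x]])/(\partial\otimes1+1\otimes\partial_x)(A\otimes\mathcal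 V[[x]])$; Lie bracket on $\Pi\tilde\Gamma_1$ (as an even space): $[u_i\otimes P(x),u_j\otimes Q(x)]=-u_i\otimes\sum_nQ_n\frac{\partial P(x)}{\partial u_j^{(n)}}+u_j\otimes\sum_mP_m\frac{\partial Q(x)}{\partial u_i^{(m)}}$ for $P(x)=\sum_m\frac1{m!}P_mx^m$, $Q(x)=\sum_n\frac1{n!}Q_nx^n$ (derivatives applied coefficientwise). $\partial$ acts on $\tilde\Gamma_1$ by $u_i\otimes P(x)\mapsto u_i\otimes(\partial-\partial_x)P(x)$ and $\Gamma_1=\ker\partial$. *)

(* Defs.v *)
From Stdlib Require Import ClassicalEpsilon.
From HB Require Import structures.
From mathcomp Require Import all_boot all_order all_algebra.
Set Implicit Arguments. Unset Strict Implicit. Unset Printing Implicit Defensive.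
Import GRing.Theory.
Local Open Scope ring_scope.

Section ADF.
Variables (F : fieldType) (V : comAlgType F) (l : nat).

Definition is_derivation (D : V -> V) : Prop :=
  (forall (a : F) (x y : V), D (a *: x + y) = a *: D x + D y) /\
  (forall x y : V, D (x * y) = D x * y + x * D y).

(* An algebra of differentiable functions in the variables u_i, i in I = 'I_l:
   dx is the derivation \partial, dd i n is d/du_i^(n), u i n is u_i^(n). *)
Definition is_adf (dx : V -> V) (dd : 'I_l -> nat -> V -> V)
    (u : 'I_l -> nat -> V) : Prop :=
  is_derivation dx /\
  [/\ 
      (forall i n, is_derivation (dd i n)),
      (forall i j m n f, dd i m (dd j n f) = dd j n (dd i m f)),
      (forall f, exists N, forall i n, (N <= n)%N -> dd i n f = 0),
      (forall i n f, dd i n (dx f) - dx (dd i n f)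
                     = if n is n'.+1 then dd i n' f else 0) &
      ((forall i n, dx (u i n) = u i n.+1) /\
      (forall i j m n, dd j m (u i n) = if (i == j) && (m == n) then 1 else 0))].

Definition dbound (dd : 'I_l -> nat -> V -> V) (f : V) : nat :=
  epsilon (inhabits 0%N) (fun N => forall i n, (N <= n)%N -> dd i n f = 0).

(* vector fields sum_{i,n} X i n d/du_i^(n) : coefficient families *)
Definition vfield := 'I_l -> nat -> V.

Definition vf_act (dd : 'I_l -> nat -> V -> V) (X : vfield) (f : V) : V :=
  \sum_(i < l) \sum_(n < dbound dd f) X i n * dd i n f.

Definition vf_br dd (X Y : vfield) : vfield :=
  fun i n => vf_act dd X (Y i n) - vf_act dd Y (X i n).

Definition gpartial (dx : V -> V) dd (X : vfield) : Prop :=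
  forall f, dx (vf_act dd X f) = vf_act dd X (dx f).

(* Pi tGamma_1: xi = sum_i u_i (x) P_i(x), represented by the power-series
   coefficients: xi i r = coefficient of x^r in P_i(x). *)
Definition tGamma := 'I_l -> nat -> V.

(* P_{i,n} = n! * (coefficient of x^n), so P_i(x) = sum_n P_{i,n} x^n / n! *)
Definition Pcoef (xi : tGamma) : 'I_l -> nat -> V :=
  fun i n => (n`!)%:R * xi i n.

(* Lie bracket on Pi tGamma_1 (bilinear extension of the given formula):
   [xi, eta]_k(x) = - sum_{j,n} Q_{j,n} dP_k(x)/du_j^(n)
                    + sum_{i,m} P_{i,m} dQ_k(x)/du_i^(m), coefficientwise. *)
Definition gbr dd (xi eta : tGamma) : tGamma :=
  fun k r => - vf_act dd (Pcoef eta) (xi k r) + vf_act dd (Pcoef xi) (eta k r).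

(* \partial on tGamma_1 : u (x) P(x) |-> u (x) (\partial - \partial_x) P(x) *)
Definition gdx (dx : V -> V) (xi : tGamma) : tGamma :=
  fun k r => dx (xi k r) - (r.+1)%:R * xi k r.+1.

Definition Gamma1 dx (xi : tGamma) : Prop := forall k r, gdx dx xi k r = 0.

Definition Phi1 (xi : tGamma) : vfield := Pcoef xi.

End ADF.

(* Main.v *)
Require Import Defs.
From HB Require Import structures.
From mathcomp Require Import all_boot all_order all_algebra.
From Stdlib Require Import ClassicalEpsilon.
Import GRing.Theory.
Local Open Scope ring_scope.
Set Implicit Arguments. Unset Strict Implicit.

Lemma der_add (F : fieldType) (V : comAlgType F) (D : V -> V) :
  is_derivation D -> forall x y, D (x + y) = D x + D y.
Proof. by move=> [H _] x y; have := H 1 x y; rewrite !scale1r. Qed.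

Lemma der0 (F : fieldType) (V : comAlgType F) (D : V -> V) :
  is_derivation D -> D 0 = 0.
Proof.
move=> HD; have := der_add HD 0 0; rewrite addr0 => /eqP.
by rewrite eq_sym -subr_eq0 addrK => /eqP.
Qed.

Lemma der_muln (F : fieldType) (V : comAlgType F) (D : V -> V) :
  is_derivation D -> forall x k, D (x *+ k) = D x *+ k.
Proof.
move=> HD x; elim=> [|k IH]; first by rewrite !mulr0n der0.
by rewrite !mulrS der_add // IH.
Qed.

Lemma der_sum (F : fieldType) (V : comAlgType F) (D : V -> V) (I : Type)
  (r : seq I) (P : pred I) (g : I -> V) :
  is_derivation D -> D (\sum_(i <- r | P i) g i) = \sum_(i <- r | P i) D (g i).
Proof.
move=> HD; apply: (big_morph D (der_add HD) (der0 HD)).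
Qed.

Definition vsum (F : fieldType) (V : comAlgType F) (l : nat)
  (dd : 'I_l -> nat -> V -> V) (X : vfield V l) (f : V) (N : nat) : V :=
  \sum_(i < l) \sum_(0 <= n < N) X i n * dd i n f.

Definition bnd (F : fieldType) (V : comAlgType F) (l : nat)
  (dd : 'I_l -> nat -> V -> V) (f : V) (N : nat) :=
  forall i n, (N <= n)%N -> dd i n f = 0.

Lemma vsum_widen (F : fieldType) (V : comAlgType F) (l : nat) dd X f N M :
  @bnd F V l dd f N -> (N <= M)%N -> vsum dd X f M = vsum dd X f N.
Proof.
move=> HB HNM; apply: eq_bigr => i _.
rewrite (@big_cat_nat _ _ _ N 0 M _ _ (leq0n N) HNM) /= [X in _ + X]big1_seq ?addr0 //.
move=> n /andP [_]; rewrite mem_index_iota => /andP [Hn _].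
by rewrite HB // mulr0.
Qed.

Lemma vf_act_bnd (F : fieldType) (V : comAlgType F) (l : nat) dx dd u X f N :
  @is_adf F V l dx dd u -> bnd dd f N -> vf_act dd X f = vsum dd X f N.
Proof.
move=> [_ [_ _ Hfin _ _]] HB.
have HD : bnd dd f (dbound dd f).
  rewrite /dbound; apply: epsilon_spec; exact: Hfin.
have -> : vf_act dd X f = vsum dd X f (dbound dd f).
  by apply: eq_bigr => i _; rewrite big_mkord.
rewrite -(vsum_widen X HD (leq_maxl _ N)).
by rewrite (vsum_widen X HB (leq_maxr _ N)).
Qed.

Lemma bnd_ex (F : fieldType) (V : comAlgType F) (l : nat) dx dd u f :
  @is_adf F V l dx dd u -> exists N, bnd dd f N.
Proof. by move=> [_ [_ _ Hfin _ _]]; apply: Hfin. Qed.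

Lemma vf_act_muln (F : fieldType) (V : comAlgType F) (l : nat) dx dd u X f k :
  @is_adf F V l dx dd u -> vf_act dd X (f *+ k) = vf_act dd X f *+ k.
Proof.
move=> Ha; have [N HN] := bnd_ex f Ha.
have Hd : forall i n, dd i n (f *+ k) = dd i n f *+ k.
  by move=> i n; case: Ha => _ [Hd _ _ _ _]; rewrite der_muln.
have HN' : bnd dd (f *+ k) N by move=> i n Hn; rewrite Hd HN // mul0rn.
rewrite (vf_act_bnd X Ha HN) (vf_act_bnd X Ha HN') /vsum -sumrMnl.
apply: eq_bigr => i _; rewrite -sumrMnl; apply: eq_bigr => n _.
by rewrite Hd mulrnAr.
Qed.

Lemma natr_mulV (F : fieldType) (V : comAlgType F) (k : nat) (v : V) :
  (k%:R : V) * v = (k%:R : F) *: v.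
Proof. by rewrite mulr_natl scaler_nat. Qed.

Lemma nat_neq0 (F : fieldType) (k : nat) :
  [pchar F] =i pred0 -> (0 < k)%N -> (k%:R : F) != 0.
Proof. by move=> /pcharf0P Hc Hk; rewrite Hc -lt0n. Qed.

Lemma vf_act_u (F : fieldType) (V : comAlgType F) (l : nat) dx dd u X j m :
  @is_adf F V l dx dd u -> vf_act dd X (u j m) = X j m.
Proof.
move=> Ha; have Hu := Ha; case: Hu => _ [_ _ _ _ [_ Hdu]].
have HB : bnd dd (u j m) m.+1.
  move=> i n Hn; rewrite Hdu; case: eqP => // _ /=.
  by case: eqP => // En; move: Hn; rewrite En ltnn.
rewrite (vf_act_bnd X Ha HB) /vsum (bigD1 j) //= [X in _ + X]big1 => [|i Hij].
  rewrite addr0 big_nat_recr //= Hdu !eqxx mulr1 big1_seq ?add0r // => n.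
  rewrite mem_index_iota => /andP [_ /andP [_ Hn]].
  by rewrite Hdu eqxx /= (ltn_eqF Hn) mulr0.
apply: big1 => n _; rewrite Hdu.
by case: eqP => [Eij|]; [move: Hij; rewrite Eij eqxx | rewrite mulr0].
Qed.

Lemma gpartial_iff (F : fieldType) (V : comAlgType F) (l : nat) dx dd u X :
  @is_adf F V l dx dd u ->
  (gpartial dx dd X <-> forall i n, dx (X i n) = X i n.+1).
Proof.
move=> Ha; have Hb := Ha; case: Hb => Hdx [Hdd _ Hfin Hcomm [Hdu _]]; split.
  by move=> Hg i n; have := Hg (u i n); rewrite Hdu !(vf_act_u _ _ _ Ha).
move=> HX f; have [N HN] := Hfin f.
have HN1 : bnd dd f N.+1 by move=> i n Hn; apply: HN; exact: ltnW.
have Hdf : forall i n, dd i n (dx f)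
   = dx (dd i n f) + (if n is n'.+1 then dd i n' f else 0).
  by move=> i n; rewrite -(Hcomm i n f) addrC subrK.
have HB' : bnd dd (dx f) N.+1.
  move=> i n Hn; rewrite Hdf HN1 // der0 // add0r.
  by case: n Hn => // n Hn; apply: HN.
rewrite (vf_act_bnd X Ha HN1) (vf_act_bnd X Ha HB') /vsum der_sum //.
apply: eq_bigr => i _; rewrite der_sum //.
have -> : \sum_(0 <= n < N.+1) dx (X i n * dd i n f)
   = \sum_(0 <= n < N.+1) dx (X i n) * dd i n f
     + \sum_(0 <= n < N.+1) X i n * dx (dd i n f).
  by rewrite -big_split /=; apply: eq_bigr => n _; case: Hdx => _ ->.
have -> : \sum_(0 <= n < N.+1) X i n * dd i n (dx f)
   = \sum_(0 <= n < N.+1) X i n * dx (dd i n f)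
     + \sum_(0 <= n < N.+1) X i n * (if n is n'.+1 then dd i n' f else 0).
  by rewrite -big_split /=; apply: eq_bigr => n _; rewrite Hdf mulrDr.
rewrite addrC; congr (_ + _).
rewrite big_nat_recr //= HN // mulr0 addr0 big_nat_recl //= mulr0 add0r.
by apply: eq_bigr => n _; rewrite HX.
Qed.

Lemma muln_eq0 (F : fieldType) (V : comAlgType F) (k : nat) (v : V) :
  [pchar F] =i pred0 -> (0 < k)%N -> (v *+ k = 0) <-> v = 0.
Proof.
move=> Hc Hk; split => [|->]; last by rewrite mul0rn.
by rewrite -scaler_nat => /eqP; rewrite scaler_eq0 (negbTE (nat_neq0 Hc Hk)) => /eqP.
Qed.

Lemma Gamma1_iff (F : fieldType) (V : comAlgType F) (l : nat) dx dd u (xi : tGamma V l) :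
  [pchar F] =i pred0 -> @is_adf F V l dx dd u ->
  (Gamma1 dx xi <-> forall i n, dx (Pcoef xi i n) = Pcoef xi i n.+1).
Proof.
move=> Hc Ha; case: Ha => Hdx _.
have E : forall i n, dx (Pcoef xi i n) - Pcoef xi i n.+1 = gdx dx xi i n *+ n`!.
  move=> i n; rewrite /Pcoef /gdx !mulr_natl der_muln // factS mulrnA.
  by rewrite mulrnBl.
split => H i n.
  by apply/eqP; rewrite -subr_eq0 E H mul0rn.
by apply/(muln_eq0 _ Hc (fact_gt0 n)); rewrite -E H subrr.
Qed.

Unset Implicit Arguments.
From Stdlib Require Import FunctionalExtensionality.

Theorem proposition4p5 (F : fieldType) (V : comAlgType F) (l : nat)
    (dx : V -> V) (dd : 'I_l -> nat -> V -> V) (u : 'I_l -> nat -> V) :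
  [pchar F] =i pred0 ->
  is_adf dx dd u ->
  [/\ (forall (a : F) (xi eta : tGamma V l) i n,
         Phi1 (fun k r => a *: xi k r + eta k r) i n
         = a *: Phi1 xi i n + Phi1 eta i n),
      bijective (@Phi1 F V l),
      (forall xi eta : tGamma V l,
         Phi1 (gbr dd xi eta) = vf_br dd (Phi1 xi) (Phi1 eta)),
      (forall xi : tGamma V l, Gamma1 dx xi <-> gpartial dx dd (Phi1 xi)) &
      (forall X : vfield V l, gpartial dx dd X ->
         exists xi : tGamma V l, Gamma1 dx xi /\ Phi1 xi = X)].
Proof.
move=> Hc Ha.
pose g (X : vfield V l) : tGamma V l := fun i n => ((n`!)%:R : F)^-1 *: X i n.
have gK : forall X, Phi1 (g X) = X.
  move=> X; apply: functional_extensionality => i;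
  apply: functional_extensionality => n.
  rewrite /Phi1 /Pcoef /g natr_mulV scalerA mulfV ?scale1r //.
  exact: nat_neq0 Hc (fact_gt0 n).
have Hiff : forall xi : tGamma V l, Gamma1 dx xi <-> gpartial dx dd (Phi1 xi).
  move=> xi; rewrite (Gamma1_iff _ Hc Ha) (gpartial_iff _ Ha); done.
split.
- move=> a xi eta i n; rewrite /Phi1 /Pcoef mulrDr.
  by rewrite !natr_mulV scalerA mulrC -scalerA.
- exists g => //= xi; apply: functional_extensionality => i;
  apply: functional_extensionality => n.
  rewrite /Phi1 /Pcoef /g natr_mulV scalerA mulVf ?scale1r //.
  exact: nat_neq0 Hc (fact_gt0 n).
- move=> xi eta; apply: functional_extensionality => i;
  apply: functional_extensionality => n.
  rewrite /Phi1 /vf_br /gbr /Pcoef !mulr_natl !(vf_act_muln _ _ _ Ha).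
  by rewrite mulrnDl mulNrn addrC.
- exact: Hiff.
- by move=> X HX; exists (g X); rewrite Hiff gK.
Qed.
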